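(* Let $(A,\mu,\alpha,\beta)$ be a BiHom-associative algebra and let $\sigma,\tau,\eta,R:A\to A$ be linear maps such that $\sigma,\tau,\eta$ are algebra maps (multiplicative for $\mu$), $R$ is a $\{\sigma,\tau\}$-Rota-Baxter operator, and any two of the maps $\alpha,\beta,\sigma,\tau,\eta,R$ commute. Define operations on $A$ by $x\prec y=\sigma(x)R(\eta(y))$ and $x\succ y=R(x)\tau(\eta(y))$ for $x,y\in A$. Then $(A,\prec,\succ,\alpha\sigma,\beta\tau\eta)$ is a BiHom-dendriform algebra.
   Context: Work over a field $\Bbbk$; $\mu(x\otimes y)=xy$. A BiHom-associative algebra $(A,\mu,\alpha,\beta)$ consists of a linear space $A$, a bilinear multiplication $\mu$, and linear maps $\alpha,\beta:A\to A$ with $\alpha\beta=\beta\alpha$, $\alpha(xy)=\alpha(x)\alpha(y)$, $\beta(xy)=\beta(x)\beta(y)$ and $\alpha(x)(yz)=(xy)\beta(z)$ for all $x,y,z$. For algebra maps $\sigma,\tau$, a linear map $R$ is a $\{\sigma,\tau\}$-Rota-Baxter operator if $R(\sigma(a))R(\tau(b))=R\big(\sigma(a)R(b)+R(a)\tau(b)\big)$ for all $a,b\in A$. A BiHom-dendriform algebra $(A,\prec,\succ,\alpha',\beta')$ consists of a linear space $A$, bilinear operations $\prec,\succ$, and commuting linear maps $\alpha',\beta'$ that are multiplicative with respect to both $\prec$ and $\succ$, such that for all $x,y,z$: $(x\prec y)\prec\beta'(z)=\alpha'(x)\prec(y\prec z+y\succ z)$; $(x\succ y)\prec\beta'(z)=\alpha'(x)\succ(y\prec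 z)$; $\alpha'(x)\succ(y\succ z)=(x\prec y+x\succ y)\succ\beta'(z)$. *)

(* Defs.v *)
From HB Require Import structures.
From mathcomp Require Import all_boot all_order all_algebra.
Set Implicit Arguments. Unset Strict Implicit. Unset Printing Implicit Defensive.
Import GRing.Theory.
Local Open Scope ring_scope.

Definition bilinear_op (K : fieldType) (A : lmodType K) (m : A -> A -> A) :=
  (forall y, linear (fun x => m x y)) /\ (forall x, linear (m x)).

Definition multiplicative_for (A : Type) (m : A -> A -> A) (f : A -> A) :=
  forall x y, f (m x y) = m (f x) (f y).

Definition BiHomAssociative (K : fieldType) (A : lmodType K)
  (mu : A -> A -> A) (alpha beta : {linear A -> A}) :=
  [/\ bilinear_op mu,
      (forall x, alpha (beta x) = beta (alpha x)),
      multiplicative_for mu alpha,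
      multiplicative_for mu beta &
      (forall x y z, mu (alpha x) (mu y z) = mu (mu x y) (beta z))].

Definition RotaBaxter_st (A : zmodType) (mu : A -> A -> A)
  (sigma tau R : A -> A) :=
  forall a b, mu (R (sigma a)) (R (tau b)) =
              R (mu (sigma a) (R b) + mu (R a) (tau b)).

Definition BiHomDendriform (K : fieldType) (A : lmodType K)
  (prec succ : A -> A -> A) (alpha' beta' : A -> A) :=
  [/\ bilinear_op prec /\ bilinear_op succ,
      (forall x, alpha' (beta' x) = beta' (alpha' x)),
      [/\ multiplicative_for prec alpha', multiplicative_for succ alpha',
          multiplicative_for prec beta' & multiplicative_for succ beta'],
      ((forall x y z, prec (prec x y) (beta' z) =
                     prec (alpha' x) (prec y z + succ y z)) /\
      (forall x y z, prec (succ x y) (beta' z) = succ (alpha' x) (prec y z))) &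
      (forall x y z, succ (alpha' x) (succ y z) =
                     succ (prec x y + succ x y) (beta' z))].

Definition pairwise_commute (A : Type) (fs : seq (A -> A)) :=
  forall i j, (i < size fs)%N -> (j < size fs)%N ->
    forall x, nth id fs i (nth id fs j x) = nth id fs j (nth id fs i x).

(* Main.v *)
Require Import Defs.
From HB Require Import structures.
From mathcomp Require Import all_boot all_order all_algebra.
Import GRing.Theory.
Local Open Scope ring_scope.

Theorem mainTheorem4 (K : fieldType) (A : lmodType K) (mu : A -> A -> A)
  (alpha beta sigma tau eta R : {linear A -> A}) :
  BiHomAssociative mu alpha beta ->
  multiplicative_for mu sigma ->
  multiplicative_for mu tau ->
  multiplicative_for mu eta ->
  RotaBaxter_st mu sigma tau R ->
  pairwise_commute [:: (alpha : A -> A); (beta : A -> A); (sigma : A -> A);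
                        (tau : A -> A); (eta : A -> A); (R : A -> A)] ->
  BiHomDendriform
    (fun x y => mu (sigma x) (R (eta y)))
    (fun x y => mu (R x) (tau (eta y)))
    (fun x => alpha (sigma x))
    (fun x => beta (tau (eta x))).
Proof.
move=> [[H1 H2] _ Ha Hb Has] Hs Ht He HRB HC.
have ab : forall x, alpha (beta x) = beta (alpha x) := HC 0%N 1%N isT isT.
have as_ : forall x, alpha (sigma x) = sigma (alpha x) := HC 0%N 2%N isT isT.
have at_ : forall x, alpha (tau x) = tau (alpha x) := HC 0%N 3%N isT isT.
have ae : forall x, alpha (eta x) = eta (alpha x) := HC 0%N 4%N isT isT.
have aR : forall x, alpha (R x) = R (alpha x) := HC 0%N 5%N isT isT.
have bs : forall x, beta (sigma x) = sigma (beta x) := HC 1%N 2%N isT isT.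
have bt : forall x, beta (tau x) = tau (beta x) := HC 1%N 3%N isT isT.
have be : forall x, beta (eta x) = eta (beta x) := HC 1%N 4%N isT isT.
have bR : forall x, beta (R x) = R (beta x) := HC 1%N 5%N isT isT.
have st : forall x, sigma (tau x) = tau (sigma x) := HC 2%N 3%N isT isT.
have se : forall x, sigma (eta x) = eta (sigma x) := HC 2%N 4%N isT isT.
have sR : forall x, sigma (R x) = R (sigma x) := HC 2%N 5%N isT isT.
have te : forall x, tau (eta x) = eta (tau x) := HC 3%N 4%N isT isT.
have tR : forall x, tau (R x) = R (tau x) := HC 3%N 5%N isT isT.
have eR : forall x, eta (R x) = R (eta x) := HC 4%N 5%N isT isT.
split.
- split; split=> [y k u v | x k u v] /=; rewrite ?linearP;
    [exact: H1 | exact: H2 | exact: H1 | exact: H2].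
- by move=> x; rewrite ?(Ha, Hb, Hs, Ht, He, linearD) ?(ab, as_, at_, ae, aR, bs, bt, be, bR, st, se, sR, te, tR, eR).
- by split=> x y; rewrite ?(Ha, Hb, Hs, Ht, He, linearD) ?(ab, as_, at_, ae, aR, bs, bt, be, bR, st, se, sR, te, tR, eR).
- split=> x y z.
  + transitivity (mu (mu (sigma (sigma x)) (sigma (R (eta y)))) (beta (R (tau (eta (eta z)))))).
      by rewrite ?(Ha, Hb, Hs, Ht, He, linearD) ?(ab, as_, at_, ae, aR, bs, bt, be, bR, st, se, sR, te, tR, eR).
    rewrite -Has.
    transitivity (mu (sigma (alpha (sigma x))) (R (mu (sigma (eta y)) (R (eta (eta z))) + mu (R (eta y)) (tau (eta (eta z)))))).
      by rewrite -HRB; rewrite ?(Ha, Hb, Hs, Ht, He, linearD) ?(ab, as_, at_, ae, aR, bs, bt, be, bR, st, se, sR, te, tR, eR).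
    by rewrite ?(Ha, Hb, Hs, Ht, He, linearD) ?(ab, as_, at_, ae, aR, bs, bt, be, bR, st, se, sR, te, tR, eR).
  + transitivity (mu (mu (sigma (R x)) (sigma (tau (eta y)))) (beta (R (tau (eta (eta z)))))).
      by rewrite ?(Ha, Hb, Hs, Ht, He, linearD) ?(ab, as_, at_, ae, aR, bs, bt, be, bR, st, se, sR, te, tR, eR).
    by rewrite -Has; rewrite ?(Ha, Hb, Hs, Ht, He, linearD) ?(ab, as_, at_, ae, aR, bs, bt, be, bR, st, se, sR, te, tR, eR).
- move=> x y z.
  transitivity (mu (alpha (R (sigma x))) (mu (R (tau (eta y))) (tau (eta (tau (eta z)))))).
    by rewrite ?(Ha, Hb, Hs, Ht, He, linearD) ?(ab, as_, at_, ae, aR, bs, bt, be, bR, st, se, sR, te, tR, eR).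
  rewrite Has HRB.
  by rewrite ?(Ha, Hb, Hs, Ht, He, linearD) ?(ab, as_, at_, ae, aR, bs, bt, be, bR, st, se, sR, te, tR, eR).
Qed.
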